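(* For every finite simple graph $G$ with at least one edge, there exists a non-isolated vertex $v$ of $G$ such that $\alpha(G)=\alpha(G-v)\ge \alpha(G-N[v])+1$.
   Context: $\alpha(H)$ denotes the independence number of a graph $H$ (maximum size of an independent set). For $S\subseteq V(G)$, $G-S$ is the graph obtained by deleting the vertices of $S$ and their incident edges; $G-v=G-\{v\}$; $N[v]$ is the closed neighbourhood of $v$ (i.e. $v$ together with its neighbours). *)

(* Defs.v *)
From mathcomp Require Import all_boot.
Set Implicit Arguments. Unset Strict Implicit. Unset Printing Implicit Defensive.

Definition simple_graph (T : finType) (e : rel T) : Prop :=
  symmetric e /\ irreflexive e.

Definition independent (T : finType) (e : rel T) (I : {set T}) : bool :=
  [forall x in I, forall y in I, ~~ e x y].

Definition alpha_on (T : finType) (e : rel T) (S : {set T}) : nat :=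
  \max_(I : {set T} | (I \subset S) && independent e I) #|I|.

Definition alpha (T : finType) (e : rel T) : nat := alpha_on e [set: T].

Definition closed_nbhd (T : finType) (e : rel T) (v : T) : {set T} :=
  v |: [set u | e v u].

Definition alpha_del (T : finType) (e : rel T) (S : {set T}) : nat :=
  alpha_on e (~: S).

(* Main.v *)
Require Import Defs.
From mathcomp Require Import all_boot.

Lemma alpha_on_ge (T : finType) (e : rel T) (S I : {set T}) :
  I \subset S -> independent e I -> #|I| <= alpha_on e S.
Proof.
move=> sIS iI; rewrite /alpha_on.
by apply: (@leq_bigmax_cond _ _ (fun J : {set T} => #|J|) I); rewrite sIS iI.
Qed.

Lemma alpha_on_max (T : finType) (e : rel T) (S : {set T}) :
  exists2 I : {set T}, (I \subset S) && independent e I & #|I| = alpha_on e S.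
Proof.
have P0 : 0 < #|[pred I : {set T} | (I \subset S) && independent e I]|.
  apply/card_gt0P; exists set0; rewrite inE sub0set /independent.
  by apply/forallP => x; rewrite in_set0.
have [I0 HI0 HE] := eq_bigmax_cond (fun J : {set T} => #|J|) P0.
exists I0; first by move: HI0; rewrite inE.
by rewrite /alpha_on -HE.
Qed.

Lemma alpha_on_mono (T : finType) (e : rel T) (S S' : {set T}) :
  S \subset S' -> alpha_on e S <= alpha_on e S'.
Proof.
move=> sS; apply/bigmax_leqP => I /andP [sI iI].
by apply: alpha_on_ge => //; apply: subset_trans sS.
Qed.

Theorem lemma1 (T : finType) (e : rel T) :
  simple_graph e ->
  (exists x y : T, e x y) ->
  exists v : T,
    (exists u : T, e v u) /\
    alpha e = alpha_del e [set v] /\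
    alpha_del e [set v] >= (alpha_del e (closed_nbhd e v)).+1.
Proof.
move=> [esym eirr] [x [y exy]].
have [I /andP [_ iI] HI] := @alpha_on_max _ e [set: T].
have [v [ev HvI]] : exists v, (exists u, e v u) /\ v \notin I.
  case xI: (x \in I); last by exists x; split; [exists y|rewrite xI].
  case yI: (y \in I); last by exists y; split; [exists x; rewrite esym|rewrite yI].
  by move/forallP: iI => /(_ x) /implyP /(_ xI) /forallP /(_ y) /implyP /(_ yI); rewrite exy.
have Hdel : alpha e = alpha_del e [set v].
  apply/eqP; rewrite eqn_leq; apply/andP; split.
    rewrite /alpha -HI /alpha_del; apply: alpha_on_ge => //.
    by apply/subsetP => z zI; rewrite !inE; apply: contra HvI => /eqP <-.
  by apply: alpha_on_mono; apply: subsetT.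
exists v; split; first by [].
split; first by [].
rewrite -Hdel.
have [J /andP [sJ iJ] HJ] := @alpha_on_max _ e (~: closed_nbhd e v).
have vJ : v \notin J.
  apply/negP => /(subsetP sJ); by rewrite !inE eqxx.
rewrite /alpha_del -HJ /alpha; have := cardsU1 v J; rewrite vJ add1n => <-.
apply: alpha_on_ge; first exact: subsetT.
have nv : forall z, z \in J -> ~~ e v z.
  by move=> z /(subsetP sJ); rewrite !inE negb_or => /andP [_].
apply/forallP => a; apply/implyP => aI; apply/forallP => b; apply/implyP => bI.
move: aI bI; rewrite !inE => /predU1P [->|aJ] /predU1P [->|bJ].
- by rewrite eirr.
- exact: nv.
- by rewrite esym; apply: nv.
- by move/forallP: iJ => /(_ a) /implyP /(_ aJ) /forallP /(_ b) /implyP /(_ bJ).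
Qed.
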